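(* Let $W=\mathrm{diag}(w_1,w_2,\dots)$ with $w_n\ge0$ for all $n$ be a diagonal operator such that $-\Delta_1\ge W$ in the sense of quadratic forms, i.e. $\sum_{n=1}^\infty w_n|\psi_n|^2\le\sum_{n=1}^\infty|\psi_{n+1}-\psi_n|^2$ for all $\psi\in\ell^2(\mathbb{N})$. Then $W=0$.
   Context: $\mathbb{N}=\{1,2,\dots\}$. The discrete Neumann Laplacian is $-\Delta_1:=2-J_1$ on $\ell^2(\mathbb{N})$, where $(J_1\psi)_1=\psi_1+\psi_2$ and $(J_1\psi)_n=\psi_{n-1}+\psi_{n+1}$ for $n\ge2$; its quadratic form is $\langle\psi,-\Delta_1\psi\rangle=\sum_{n\ge1}|\psi_{n+1}-\psi_n|^2$. *)

(* Defs.v *)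
From Stdlib Require Import Reals.
From Coquelicot Require Import Coquelicot.
Open Scope R_scope.

(* Convention: sequences on N = {1,2,...} are represented by functions
   nat -> _ shifted by one: psi k (k : nat, k >= 0) stands for psi_{k+1}. *)

Definition in_l2 (psi : nat -> C) : Prop :=
  ex_series (fun n => (Cmod (psi n)) ^ 2).

Definition neumann_form (psi : nat -> C) : R :=
  Series (fun n => (Cmod (Cminus (psi (S n)) (psi n))) ^ 2).

Definition diag_form_summand (w : nat -> R) (psi : nat -> C) : nat -> R :=
  fun n => w n * (Cmod (psi n)) ^ 2.

Definition neumann_dominates (w : nat -> R) : Prop :=
  forall psi : nat -> C, in_l2 psi ->
    ex_series (diag_form_summand w psi) /\
    Series (diag_form_summand w psi) <= neumann_form psi.

(* Main.v *)
Require Import Defs.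
From Stdlib Require Import Reals Lra Lia ZArith.
From Coquelicot Require Import Coquelicot.
Open Scope R_scope.

Lemma fin_series (a: nat->R) N : (forall k, (N < k)%nat -> a k = 0) -> is_series a (sum_n a N).
Proof.
  intros H. unfold is_series.
  apply filterlim_ext_loc with (fun _ => sum_n a N).
  - exists N. intros k Hk. induction Hk. reflexivity.
    rewrite sum_Sn, <- IHHk, (H (S m)) by lia. change (sum_n a N = Rplus (sum_n a N) 0); rewrite Rplus_0_r; reflexivity.
  - apply filterlim_const.
Qed.

Lemma RtoC_sub (x y : R) : Cminus (RtoC x) (RtoC y) = RtoC (x - y).
Proof. unfold Cminus, Cplus, Copp, RtoC; simpl. f_equal; ring. Qed.

Lemma cm2 (x:R) : Cmod (RtoC x) ^ 2 = x^2.
Proof. rewrite Cmod_R. apply pow2_abs. Qed.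
Definition f (M k : nat) : R := if (k <=? M)%nat then 1 - INR k / INR M else 0.

Lemma f_diff (m k : nat) : (f (S m) (S k) - f (S m) k)^2 = if (k <=? m)%nat then / (INR (S m))^2 else 0.
Proof.
  assert (HM : 0 < INR (S m)) by (apply lt_0_INR; lia).
  unfold f. destruct (Nat.leb_spec k m).
  - rewrite (proj2 (Nat.leb_le (S k) (S m))) by lia.
    rewrite (proj2 (Nat.leb_le k (S m))) by lia.
    rewrite S_INR. field. lra.
  - rewrite (proj2 (Nat.leb_gt (S k) (S m))) by lia.
    destruct (Nat.leb_spec k (S m)).
    + assert (k = S m) by lia. subst. field. lra.
    + ring.
Qed.

Lemma key (w : nat -> R) (hw : forall n, 0 <= w n)
  (hdom : neumann_dominates w) (m n : nat) :
  w n * f (S m) n ^ 2 <= / INR (S m).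
Proof.
  assert (HM : 0 < INR (S m)) by (apply lt_0_INR; lia).
  set (psi := fun k => RtoC (f (S m) k)).
  assert (Hl2 : in_l2 psi).
  { unfold in_l2. exists (sum_n (fun k => Cmod (psi k) ^2) (S m)).
    apply fin_series. intros k Hk. unfold psi. rewrite cm2. unfold f.
    rewrite (proj2 (Nat.leb_gt k (S m))) by lia. ring. }
  destruct (hdom psi Hl2) as [Hex Hle].
  assert (Hn : Series (fun k => if (k =? n)%nat then w n * f (S m) n ^ 2 else 0) = w n * f (S m) n ^ 2).
  { apply is_series_unique.
    assert (E : sum_n (fun k => if (k =? n)%nat then w n * f (S m) n ^ 2 else 0) n = w n * f (S m) n ^ 2).
    2:{ eassert (H := fin_series _ n _). rewrite E in H. exact H. Unshelve. intros k Hk. simpl. rewrite (proj2 (Nat.eqb_neq k n)) by lia. reflexivity. }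
    { destruct n as [|n'].
      + rewrite sum_O. reflexivity.
      + rewrite sum_Sn. rewrite Nat.eqb_refl.
        rewrite (sum_n_ext_loc _ (fun _ => 0)).
        * rewrite sum_n_const. change (Rplus (INR (S n') * 0) (w (S n') * f (S m) (S n') ^ 2) = w (S n') * f (S m) (S n') ^ 2). ring.
        * intros k Hk. rewrite (proj2 (Nat.eqb_neq k (S n'))) by lia. reflexivity. } }
  assert (Hd : neumann_form psi = / INR (S m)).
  { unfold neumann_form.
    rewrite (Series_ext _ (fun k => if (k <=? m)%nat then / (INR (S m))^2 else 0)).
    - apply is_series_unique.
      assert (E : sum_n (fun k => if (k <=? m)%nat then / (INR (S m))^2 else 0) m = / INR (S m)).
      2:{ eassert (H := fin_series _ m _). rewrite E in H. exact H. Unshelve. intros k Hk. simpl. rewrite (proj2 (Nat.leb_gt k m)) by lia. reflexivity. }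
      { rewrite (sum_n_ext_loc _ (fun _ => / (INR (S m))^2)).
        * rewrite sum_n_const. change (INR (S m) * / INR (S m) ^ 2 = / INR (S m)). field. lra.
        * intros k Hk. rewrite (proj2 (Nat.leb_le k m)) by lia. reflexivity. }
    - intros k. unfold psi. rewrite RtoC_sub, cm2. apply f_diff. }
  rewrite <- Hn, <- Hd. eapply Rle_trans; [| exact Hle].
  apply Series_le; [| exact Hex].
  intros k. unfold diag_form_summand. destruct (Nat.eqb_spec k n).
  - subst. unfold psi. rewrite cm2. split; [apply Rmult_le_pos; [apply hw| apply pow2_ge_0]| lra].
  - split; [lra|]. apply Rmult_le_pos; [apply hw| apply pow2_ge_0].
Qed.

Theorem theorem4p2 (w : nat -> R) (hw : forall n, 0 <= w n)
  (hdom : neumann_dominates w) : forall n, w n = 0.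
Proof.
  intros n. destruct (hw n) as [Hpos|]; [|auto].
  exfalso.
  destruct (archimed (4 / w n)) as [Hup _].
  set (m := (2 * n + Z.to_nat (up (4 / w n)))%nat).
  assert (Hm1 : 4 / w n < INR (S m)).
  { eapply Rlt_le_trans; [exact Hup|].
    destruct (Z.lt_ge_cases (up (4 / w n)) 0).
    - apply Rle_trans with 0. apply IZR_le; lia. apply pos_INR.
    - rewrite <- (Z2Nat.id (up (4/ w n))) by lia. rewrite <- INR_IZR_INZ.
      apply le_INR. unfold m. lia. }
  assert (Hm2 : 2 * INR n <= INR (S m)).
  { replace 2 with (INR 2) by (simpl; ring). rewrite <- mult_INR. apply le_INR. unfold m. lia. }
  pose proof (key w hw hdom m n) as K.
  assert (HM : 0 < INR (S m)) by (apply lt_0_INR; lia).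
  assert (Hf : 1/2 <= f (S m) n).
  { unfold f. rewrite (proj2 (Nat.leb_le n (S m))).
    - assert (INR n / INR (S m) <= 1/2); [|lra].
      apply Rmult_le_reg_r with (INR (S m)); auto.
      replace (INR n / INR (S m) * INR (S m)) with (INR n) by (field; lra). lra.
    - apply INR_le. lra. }
  assert (Hf2 : 1/4 <= f (S m) n ^ 2) by nra.
  assert (w n / 4 <= / INR (S m)) by nra.
  apply Rmult_lt_compat_l with (r := w n) in Hm1; auto.
  unfold Rdiv in Hm1. rewrite <- Rmult_assoc, (Rmult_comm (w n) 4), Rmult_assoc, Rinv_r in Hm1 by lra.
  apply Rmult_le_compat_r with (r := INR (S m)) in H; [|lra].
  rewrite Rinv_l in H by lra. lra.
Qed.
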